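(* Fix $\mu>0$. Then \[ \sum_{\substack{a\ge b,\ c\ge d\\ ad-bc=1}}\frac{1}{(a^2+\mu^2b^2)(c^2+\mu^2d^2)\big((a+c)^2+\mu^2(b+d)^2\big)}=\frac{1}{4\mu^2}\left(\frac{2\arctan\mu}{\mu}-\frac{2}{1+\mu^2}\right), \] where the sum is over all nonnegative integers $a,b,c,d$ with $a\ge b$, $c\ge d$ and $ad-bc=1$. *)

(* Defs.v *)
From mathcomp Require Import all_boot all_order all_algebra.
From mathcomp Require Import all_classical all_reals all_analysis.
Set Implicit Arguments. Unset Strict Implicit. Unset Printing Implicit Defensive.
Import Order.TTheory GRing.Theory Num.Theory.
Local Open Scope ring_scope.
Local Open Scope classical_set_scope.

(* Index set: quadruples (a,b,c,d) of nonnegative integers with a >= b,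
   c >= d and a*d - b*c = 1 (stated without truncated subtraction). *)
Definition index_set : set (nat * nat * nat * nat) :=
  [set q | let: (a, b, c, d) := q in
           (b <= a)%N /\ (d <= c)%N /\ (a * d = b * c + 1)%N].

Definition summand (R : realType) (mu : R) (q : nat * nat * nat * nat) : R :=
  let: (a, b, c, d) := q in
  1 / ((a%:R ^+ 2 + mu ^+ 2 * b%:R ^+ 2)
       * (c%:R ^+ 2 + mu ^+ 2 * d%:R ^+ 2)
       * ((a + c)%:R ^+ 2 + mu ^+ 2 * (b + d)%:R ^+ 2)).

(* Main.v *)
Require Import Defs.
From mathcomp Require Import all_boot all_order all_algebra.
From mathcomp Require Import all_classical all_reals all_analysis.
From mathcomp Require Import ring lra zify.
Import Order.TTheory GRing.Theory Num.Theory.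
Import numFieldNormedType.Exports numFieldTopology.Exports.
Local Open Scope classical_set_scope.

Definition quad := (nat * nat * nat * nat)%type.
Definition lc (q : quad) : quad := let: (a, b, c, d) := q in (a, b, a + c, b + d)%N.
Definition rc (q : quad) : quad := let: (a, b, c, d) := q in (a + c, b + d, c, d)%N.
Definition root : quad := (1, 0, 1, 1)%N.
Fixpoint node (p : seq bool) : quad :=
  if p is x :: p' then (if x then lc (node p') else rc (node p')) else root.
Fixpoint paths (n : nat) : seq (seq bool) :=
  if n is n'.+1 then [seq true :: p | p <- paths n'] ++ [seq false :: p | p <- paths n']
  else [:: [::]].
Definition lev n := map node (paths n).

Lemma node_inv p : index_set (node p) /\
  (let: (a, b, c, d) := node p in size p + 2 <= a + c)%N.
Proof.
elim: p => [|x p [IH1 IH2]] /=; first by [].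
move: IH1 IH2; case: (node p) => [[[a b] c] d] /= [h1 [h2 h3]] h4.
by case: x => /=; (split; [split; [|split]|]); nia.
Qed.

Lemma node_cmp x p : (let: (a, b, c, d) := node (x :: p) in
   if x then a < c else c < a)%N.
Proof.
have := node_inv p; rewrite /=; case: (node p) => [[[a b] c] d] /= [[h1 [h2 h3]] h4].
by case: x => /=; nia.
Qed.

Lemma node_inj : injective node.
Proof.
elim=> [|x p IH] [|y p'] //.
- by move=> h; have := node_cmp y p'; rewrite -h /=; destruct y.
- by move=> h; have := node_cmp x p; rewrite h /=; destruct x.
move=> h.
have exy : x = y.
  have c1 := node_cmp x p; have c2 := node_cmp y p'; rewrite h in c1.
  move: c1 c2; case: (node (y :: p')) => [[[a b] c] d].
  by destruct x, y => //; lia.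
subst y; congr (_ :: _); apply: IH; move: h => /=.
case: (node p) => [[[a b] c] d]; case: (node p') => [[[a' b'] c'] d'].
by case: x => /= [[e1 e2 e3 e4]|[e1 e2 e3 e4]]; congr (_, _, _, _); lia.
Qed.

Lemma size_paths n p : p \in paths n -> size p = n.
Proof.
elim: n p => [|n IH] p /=; first by rewrite inE => /eqP ->.
by rewrite mem_cat => /orP[] /mapP[q /IH <- ->].
Qed.

Lemma uniq_paths n : uniq (paths n).
Proof.
elim: n => [|n IH] //=.
rewrite cat_uniq !map_inj_uniq ?IH /=; try by move=> ? ? [].
rewrite andbT; apply/hasPn => ? /mapP[q _ ->]; by apply/mapP => -[? _ []].
Qed.

Lemma mem_paths p : p \in paths (size p).
Proof.
elim: p => [|x p IH] //=; rewrite mem_cat.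
by case: x; [rewrite map_f | rewrite orbC map_f].
Qed.

Lemma node_surj n : forall q, index_set q ->
  (let: (a, b, c, d) := q in a + c <= n)%N -> exists p, node p = q.
Proof.
elim: n => [|n IH] [[[a b] c] d] /= [h1 [h2 h3]] h4; first by nia.
have a0 : (0 < a)%N by nia.
have c0 : (0 < c)%N by nia.
have [ac|ca|ac] := ltngtP a c.
- have bd : (b <= d)%N by nia.
  have [f cE] : exists f, c = a + f by exists (c - a); lia.
  subst c.
  have [e dE] : exists e, d = b + e by exists (d - b); lia.
  subst d.
  have he : a * e = b * f + 1 by nia.
  have ef : (e <= f)%N.
    rewrite leqNgt; apply/negP => fe.
    have h5 : (a * f.+1 <= a * e)%N := leq_mul (leqnn a) fe.
    have h6 : (b * f <= a * f)%N := leq_mul h1 (leqnn f).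
    rewrite mulnS in h5.
    have a1 : a = 1 by lia.
    subst a; move: h1; rewrite leq_eqVlt ltnS leqn0 => /orP[] /eqP bE; subst b; lia.
  have [p hp] := IH (a, b, f, e) (conj h1 (conj ef he)) ltac:(simpl; lia).
  by exists (true :: p); rewrite /= hp.
- have db : (d <= b)%N by nia.
  have [g aE] : exists g, a = g + c by exists (a - c); lia.
  subst a.
  have [h bE] : exists h, b = h + d by exists (b - d); lia.
  subst b.
  have he : g * d = h * c + 1 by nia.
  have hg : (h <= g)%N by nia.
  have [p hp] := IH (g, h, c, d) (conj hg (conj h2 he)) ltac:(simpl; lia).
  by exists (false :: p); rewrite /= hp.
- subst c.
  have bd : (b < d)%N by nia.
  have a1 : a = 1 by nia.
  subst a; have b0 : b = 0 by lia.
  subst b; have d1 : d = 1 by lia.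
  by subst d; exists [::].
Qed.

Local Open Scope ring_scope.

Section B.
Variable R : realType.
Definition gf (x y : R) := atan y - atan x
  - (y - x) * (1 + x * y) / ((1 + x ^+ 2) * (1 + y ^+ 2)).
Lemma sq1_gt0 (t : R) : 0 < 1 + t ^+ 2.
Proof. by rewrite ltr_pwDl // sqr_ge0. Qed.

Lemma sos_neq0 (x y : R) : x != 0 -> x ^+ 2 + y ^+ 2 != 0.
Proof.
move=> hx; rewrite lt0r_neq0 // ltr_pwDl ?sqr_ge0 //.
by rewrite lt_neqAle sqr_ge0 andbT eq_sym sqrf_eq0.
Qed.

Lemma isdM (f g : R -> R) (t df dg : R) : is_derive t 1 f df -> is_derive t 1 g dg ->
  is_derive t 1 (fun s => f s * g s) (f t * dg + g t * df).
Proof. by move=> hf hg; have := is_deriveM hf hg. Qed.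

Lemma isdB (f g : R -> R) (t df dg : R) : is_derive t 1 f df -> is_derive t 1 g dg ->
  is_derive t 1 (fun s => f s - g s) (df - dg).
Proof. by move=> hf hg; have := is_deriveB hf hg. Qed.

Lemma isdD (f g : R -> R) (t df dg : R) : is_derive t 1 f df -> is_derive t 1 g dg ->
  is_derive t 1 (fun s => f s + g s) (df + dg).
Proof. by move=> hf hg; have := is_deriveD hf hg. Qed.

Lemma isdid (t : R) : is_derive t 1 (fun s : R => s) 1.
Proof. exact: is_derive_id. Qed.

Lemma isdc (t k : R) : is_derive t 1 (fun s : R => k) 0.
Proof. exact: is_derive_cst. Qed.

Lemma isdV (f : R -> R) (t df : R) : f t != 0 -> is_derive t 1 f df ->
  is_derive t 1 (fun s => (f s)^-1) (- (f t) ^- 2 * df).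
Proof.
move=> h0 hf; apply: DeriveDef.
  by apply: derivableV => //; exact: ex_derive hf.
by rewrite deriveV ?derive_val //; exact: ex_derive hf.
Qed.

Lemma scR (a b : R^o) : a *: b = a * b. Proof. by []. Qed.

Lemma gf_bound (x y : R) : x <= y -> 0 <= gf x y <= 2 * (y - x) ^+ 3.
Proof.
move=> xy.
pose f (t : R) : R := atan t - ((t - x) * (1 + x * t)) * (1 + t ^+ 2)^-1 * (1 + x ^+ 2)^-1.
pose df (t : R) : R := 2 * (t - x) ^+ 2 / ((1 + x ^+ 2) * (1 + t ^+ 2) ^+ 2).
have hd (t : R) : is_derive t 1 f (df t).
  have h1 : 1 + t ^+ 2 != 0 by rewrite lt0r_neq0 // sq1_gt0.
  have h2 : 1 + x ^+ 2 != 0 by rewrite lt0r_neq0 // sq1_gt0.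
  rewrite /f; apply: is_derive_eq.
  rewrite ?scR /df.
  field.
  by rewrite h2 h1.
have := @MVT_segment R f df x y xy (fun t _ => hd t).
case.
  apply: derivable_within_continuous => t _.
  by have [] := hd t.
move=> c; rewrite in_itv /= => /andP[xc cy] hfe.
have -> : gf x y = f y - f x.
  rewrite /gf /f; field.
  by rewrite !lt0r_neq0 ?sq1_gt0.
rewrite hfe /df.
have hy : 0 <= y - x by rewrite subr_ge0.
have hc : 0 <= c - x by rewrite subr_ge0.
have D1 : 1 <= (1 + x ^+ 2) * (1 + c ^+ 2) ^+ 2.
  have hu := sqr_ge0 x; have hv := sqr_ge0 c.
  have : 0 <= x ^+ 2 * (1 + c ^+ 2) ^+ 2 by rewrite mulr_ge0 // sqr_ge0.
  nra.
have D0 : 0 < (1 + x ^+ 2) * (1 + c ^+ 2) ^+ 2 by lra.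
apply/andP; split.
  apply: mulr_ge0 => //; apply: divr_ge0; last exact: ltW.
  by apply: mulr_ge0 => //; exact: sqr_ge0.
have e1 : 2 * (c - x) ^+ 2 / ((1 + x ^+ 2) * (1 + c ^+ 2) ^+ 2) <= 2 * (y - x) ^+ 2.
  rewrite ler_pdivrMr //.
  have : (c - x) ^+ 2 <= (y - x) ^+ 2 by rewrite lerXn2r ?nnegrE //; lra.
  move=> h; have : 0 <= (y - x) ^+ 2 by rewrite sqr_ge0.
  nra.
by rewrite [_ ^+ 3]exprSr mulrA; exact: (ler_wpM2r hy e1).
Qed.

Variable mu : R.
Hypothesis hmu : 0 < mu.
Definition xq (q : quad) : R := let: (a, b, c, d) := q in mu * b%:R / a%:R.
Definition yq (q : quad) : R := let: (a, b, c, d) := q in mu * d%:R / c%:R.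
Definition Fq (q : quad) : R := gf (xq q) (yq q) / (2 * mu ^+ 3).

Lemma tele q : index_set q -> summand mu q = Fq q - Fq (lc q) - Fq (rc q).
Proof.
case: q => [[[a b] c] d] /= [h1 [h2 h3]].
have a0 : (0 < a)%N by nia.
have c0 : (0 < c)%N by nia.
have hA : (a%:R : R) != 0 by rewrite pnatr_eq0 -lt0n.
have hC : (c%:R : R) != 0 by rewrite pnatr_eq0 -lt0n.
have hAC : ((a + c)%:R : R) != 0 by rewrite pnatr_eq0 addn_eq0 negb_and -lt0n a0.
have hd : (d%:R : R) = (b%:R * c%:R + 1) / a%:R.
  by apply: (mulfI hA); rewrite -[LHS]natrM h3 natrD natrM [RHS]mulrC divfK.
have hm : mu != 0 by rewrite lt0r_neq0.
rewrite /Fq /gf /= hd !natrD hd.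
have hAC' : (a%:R + c%:R : R) != 0 by rewrite -natrD.
field.
by rewrite hm hC hA hAC' !sos_neq0 // ?mulf_neq0.
Qed.

Lemma delta_eq {q} : index_set q ->
  yq q - xq q = mu / ((let: (a, b, c, d) := q in (a * c)%N)%:R).
Proof.
case: q => [[[a b] c] d] /= [h1 [h2 h3]].
have a0 : (0 < a)%N by nia.
have c0 : (0 < c)%N by nia.
have hA : (a%:R : R) != 0 by rewrite pnatr_eq0 -lt0n.
have hC : (c%:R : R) != 0 by rewrite pnatr_eq0 -lt0n.
have hd : (d%:R : R) = (b%:R * c%:R + 1) / a%:R.
  by apply: (mulfI hA); rewrite -[LHS]natrM h3 natrD natrM [RHS]mulrC divfK.
rewrite hd natrM; field.
by rewrite hC hA.
Qed.

Lemma delta_split q : yq q - xq q = (yq (lc q) - xq (lc q)) + (yq (rc q) - xq (rc q)).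
Proof. by case: q => [[[a b] c] d] /=; ring. Qed.

Lemma sum_lev (h : quad -> R) n :
  \sum_(q <- lev n.+1) h q = \sum_(q <- lev n) (h (lc q) + h (rc q)).
Proof.
rewrite /lev /= map_cat big_cat -!map_comp !big_map big_split /=.
by [].
Qed.

Lemma lev_inv {n q} : q \in lev n ->
  index_set q /\ (let: (a, b, c, d) := q in n + 2 <= a + c)%N.
Proof.
by case/mapP => p /size_paths <- ->; exact: node_inv.
Qed.

Lemma sum_delta n : \sum_(q <- lev n) (yq q - xq q) = mu.
Proof.
elim: n => [|n IH].
  by rewrite /lev /= big_seq1 /= ?mulr1n ?mulr0n !divr1 mulr1 mulr0 subr0.
rewrite sum_lev -[RHS]IH; apply: eq_bigr => q _.
by rewrite -delta_split.
Qed.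

Lemma Fq_bound {n q} : q \in lev n ->
  0 <= Fq q <= (yq q - xq q) / (mu * (n.+1)%:R ^+ 2).
Proof.
move=> hl; have [hq hs] := lev_inv hl.
have hd := delta_eq hq.
set m : R := (n.+1)%:R.
have m0 : 0 < m by rewrite ltr0n.
have acn : (n.+1 <= (let: (a, b, c, d) := q in (a * c)%N))%N.
  case: q hq hs {hl hd} => [[[a b] c] d] /= [h1 [h2 h3]] h4.
  have a0 : (0 < a)%N by nia.
  have c0 : (0 < c)%N by nia.
  nia.
have ac0 : (0 < (let: (a, b, c, d) := q in (a * c)%N))%N by apply: leq_trans acn.
set δ := yq q - xq q.
have hpos : 0 <= δ by rewrite /δ hd divr_ge0 // ltW.
have hle : δ <= mu / m.
  by rewrite /δ hd ler_pM2l // lef_pV2 ?posrE ?ltr0n // ler_nat.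
have hxy : xq q <= yq q by rewrite -subr_ge0.
have /andP[g0 g1] := gf_bound _ _ hxy.
have mu3 : 0 < 2 * mu ^+ 3 by rewrite mulr_gt0 // exprn_gt0.
apply/andP; split; first by rewrite /Fq divr_ge0 // ltW.
rewrite /Fq ler_pdivrMr //.
apply: (le_trans g1); rewrite -/δ.
have e2 : δ ^+ 3 <= δ * (mu / m) ^+ 2.
  rewrite [_ ^+ 3]exprS ler_wpM2l //.
  by rewrite lerXn2r ?nnegrE // divr_ge0 // ltW.
have -> : δ / (mu * m ^+ 2) * (2 * mu ^+ 3) = 2 * (δ * (mu / m) ^+ 2).
  by field; rewrite lt0r_neq0 // lt0r_neq0.
by rewrite ler_pM2l.
Qed.

Lemma sumF_bound n : 0 <= \sum_(q <- lev n) Fq q <= ((n.+1)%:R ^+ 2)^-1.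
Proof.
apply/andP; split.
  by rewrite big_seq; apply: sumr_ge0 => q /Fq_bound /andP[].
apply: (le_trans (y := \sum_(q <- lev n) (yq q - xq q) / (mu * (n.+1)%:R ^+ 2))).
  by rewrite !big_seq; apply: ler_sum => q /Fq_bound /andP[].
rewrite -big_distrl /= sum_delta invfM mulrA divff ?mul1r //.
by rewrite lt0r_neq0.
Qed.

End B.

Local Open Scope ring_scope.
Local Open Scope classical_set_scope.

Theorem theorem9 (R : realType) (mu : R) (hmu : 0 < mu) :
  \esum_(q in index_set) (summand mu q)%:E
  = ((1 / (4 * mu ^+ 2)) * (2 * atan mu / mu - 2 / (1 + mu ^+ 2)))%:E.
Proof.
have S0r : forall q, 0 <= summand mu q.
  have hf : forall x y : R, 0 <= x ^+ 2 + mu ^+ 2 * y ^+ 2.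
    by move=> x y; apply: addr_ge0; [exact: sqr_ge0 | apply: mulr_ge0; exact: sqr_ge0].
  by case=> [[[a b] c] d]; rewrite /summand divr_ge0 // !mulr_ge0.
have S0 : forall q, ((0 : \bar R) <= (summand mu q)%:E)%E.
  by move=> q; rewrite lee_fin.
have hU : index_set = \bigcup_(k in setT) [set` lev k].
  apply/seteqP; split => q.
  - case: q => [[[a b] c] d] hq.
    have [p hp] := node_surj (a + c) _ hq (leqnn _).
    exists (size p) => //=.
    by rewrite -hp; apply: map_f; exact: mem_paths.
  - by case => k _ hk; exact: (lev_inv hk).1.
have hT : trivIset setT (fun k => [set` lev k]).
  move=> i j _ _ [q [/= hi hj]].
  case/mapP: hi => p hp eq1; case/mapP: hj => p' hp' eq2.
  have ep : p = p' by apply: node_inj; rewrite -eq1 -eq2.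
  by rewrite -(size_paths _ _ hp) -(size_paths _ _ hp') ep.
pose L k := \sum_(q <- lev k) summand mu q.
have hL : forall k, \esum_(j in [set` lev k]) (summand mu j)%:E = (L k)%:E.
  move=> k; rewrite esum_fset; last 2 first.
  - exact: finite_seq.
  - by move=> *; apply: S0.
  rewrite -fsbig_seq ?sumEFin //.
  by rewrite /lev (map_inj_uniq node_inj) uniq_paths.
rewrite hU esum_bigcupT //.
rewrite (eq_esum (fun k _ => hL k)) -nneseries_esumT; last first.
  by move=> k; rewrite lee_fin /L big_seq sumr_ge0.
pose F := @Fq R mu.
pose E n := \sum_(q <- lev n) F q.
have hPS : forall n, \sum_(0 <= k < n) L k = F root - E n.
  elim=> [|n IH].
    by rewrite big_geq // /E /lev /= big_seq1 subrr.
  rewrite big_nat_recr //= IH /E sum_lev.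
  have -> : L n = \sum_(q <- lev n) (F q - (F (lc q) + F (rc q))).
    apply: eq_big_seq => q hq.
    rewrite (@tele R mu hmu q (lev_inv hq).1).
    by rewrite /F; ring.
  rewrite big_split /= sumrN; ring.
have hE : E n @[n --> \oo] --> (0 : R).
  apply: (@squeeze_cvgr _ _ _ _ (fun=> 0) harmonic); last 2 first.
  - exact: cvg_cst.
  - exact: cvg_harmonic.
  apply: nearW => n; have /andP[e0 e1] := @sumF_bound R mu hmu n.
  rewrite e0 /= (le_trans e1) // expr2 invfM ler_piMr //.
  by rewrite invf_le1 // ?ler1n // ltr0n.
have hc : (fun n => F root - E n) @ \oo --> F root.
  rewrite -[X in _ --> X]subr0; apply: cvgB => //; exact: cvg_cst.
have -> : (fun n => \sum_(0 <= k < n) (L k)%:E) = EFin \o (fun n => F root - E n).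
  by apply/funext => n /=; rewrite sumEFin hPS.
rewrite EFin_lim; last by apply/cvg_ex; exists (F root).
rewrite (cvg_lim _ hc) //.
congr (_%:E).
rewrite /F /Fq /gf /= ?mulr1n ?mulr0n !divr1 mulr1 mulr0 atan0 subr0.

have hm : mu != 0 by rewrite lt0r_neq0.
have h1 : 1 + mu ^+ 2 != 0 by rewrite lt0r_neq0 // sq1_gt0.
field.
by rewrite hm h1.
Qed.
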